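(* For programs $\Omega_1,\Omega_2$ with weight constraints, $\Omega_1$ is strongly equivalent to $\Omega_2$ (as programs with weight constraints) if and only if $[\Omega_1]$ is strongly equivalent to $[\Omega_2]$ (as programs with nested expressions).
   Context: Programs with nested expressions. A literal is a propositional atom $a$ or its classical negation $\neg a$; a set of literals is consistent if it contains no pair $a,\neg a$. Elementary formulas are literals, $\bot$, $\top$. Formulas are built with $\mathit{not}$, '','' (conjunction) and '';'' (disjunction). A rule is $\mathit{Head}\leftarrow\mathit{Body}$ with formulas; a program is a set of rules. For consistent $Z$: $Z\models l$ iff $l\in Z$; $Z\models\top$; $Z\not\models\bot$; $Z\models(F,G)$ iff both; $Z\models(F;G)$ iff at least one; $Z\models\mathit{not}\,F$ iff $Z\not\models F$; $Z$ satisfies a program if $Z\models\mathit{Body}$ implies $Z\models\mathit{Head}$ for every rule. Reduct: $F^Z=F$ for elementary $F$, commutes with '','' and '';'', $(\mathit{not}\,F)^Z=\bot$ if $Z\models F$, $\top$ otherwise; $\Pi^Z$ applies this to heads and bodies. $Z$ is an answer set of a $\mathit{not}$-free program if it is a minimal consistent set satisfying it, and of $\Pi$ if it is an answer set of $\Pi^Z$. Programs $\Pi_1,\Pi_2$ with nested expressions are strongly equivalent if for every program $\Pi$ with nested expressions, $\Pi_1\cup\Pi$ and $\Pi_2\cup\Pi$ have the same answer sets. $\langle F_1,\dots,F_n\rangle:X$ is the disjunction over $I\in X$ of the conjunctions of $F_i$, $i\in I$ (empty conjunction $\top$, empty disjunction $\bot$). Programs with weight constraints. A rule element is a literal $l$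 (positive) or $\mathit{not}\,l$ (negative). A weight constraint is $L\le\{c_1=w_1,\dots,c_m=w_m\}\le U$ ($L,U$ reals or $\pm\infty$, $w_i\ge0$ reals). A rule is $C_0\leftarrow C_1,\dots,C_n$ with weight constraints; the rule elements of $C_0$ are its head elements; a program is a set of rules; a literal $c$ is identified with $1\le\{c=1\}$. $Z$ satisfies a constraint if $L\le\sum_{j:Z\models c_j}w_j\le U$, and a program if every rule whose body constraints are all satisfied has its head satisfied. $(L\le S)^Z=L^Z\le S'$, where $S'$ drops negative pairs and $L^Z$ is $L$ minus the sum of weights of negative pairs $c=w$ with $Z\models c$. The reduct of $L_0\le S_0\le U_0\leftarrow L_1\le S_1\le U_1,\dots,L_n\le S_n\le U_n$ is, if $Z\models S_i\le U_i$ for all $i\ge1$, the rules $l\leftarrow(L_1\le S_1)^Z,\dots,(L_n\le S_n)^Z$ for the positive head elements $l\in Z$; otherwise empty. $\Omega^Z$ is the union; $\mathit{cl}(\Omega^Z)$ is its unique minimal satisfying set of literals. $Z$ is an answer set of $\Omega$ if $Z\models\Omega$ and $\mathit{cl}(\Omega^Z)=Z$. $\Omega_1,\Omega_2$ are strongly equivalent if for every program $\Omega$ with weight constraints, $\Omega_1\cup\Omega$ and $\Omega_2\cup\Omega$ have the same answer sets. Translation: $[w\le S]=\langle c_1,\dots,c_m\rangle:\{I: w\le\sum_{i\in I}w_i\}$, $[w<S]=\langle c_1,\dots,c_m\rangle:\{I: w<\sum_{i\in I}w_i\}$, $[S\le U]=\mathit{not}\,[U<S]$, $[L\le S\le U]=[L\le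 S],[S\le U]$; $[\Omega]$ replaces each rule $C_0\leftarrow C_1,\dots,C_n$ by $(l_1;\mathit{not}\,l_1),\dots,(l_p;\mathit{not}\,l_p),[C_0]\leftarrow[C_1],\dots,[C_n]$, $l_1,\dots,l_p$ the positive head elements. *)

(* Defs.v *)
From Stdlib Require Import Reals List Bool.
From Coquelicot Require Import Rbar.
Import ListNotations.
Open Scope R_scope.
Set Implicit Arguments.

(* Atoms range over an arbitrary type [A]; a literal is an atom or its classical negation. *)
Inductive lit (A : Type) : Type :=
| Atom : A -> lit A
| NegA : A -> lit A.
Arguments Atom {A} _.
Arguments NegA {A} _.

Definition lset (A : Type) := lit A -> bool.

Definition consistent (A : Type) (Z : lset A) : Prop :=
  forall a : A, Z (Atom a) && Z (NegA a) = false.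

Definition lsubset (A : Type) (Z1 Z2 : lset A) : Prop :=
  forall l, Z1 l = true -> Z2 l = true.

Inductive formula (A : Type) : Type :=
| FLit : lit A -> formula A
| FBot : formula A
| FTop : formula A
| FNot : formula A -> formula A
| FAnd : formula A -> formula A -> formula A
| FOr  : formula A -> formula A -> formula A.
Arguments FBot {A}.
Arguments FTop {A}.

Fixpoint fsat (A : Type) (Z : lset A) (F : formula A) : bool :=
  match F with
  | FLit l => Z l
  | FBot => false
  | FTop => true
  | FNot G => negb (fsat Z G)
  | FAnd G H => fsat Z G && fsat Z H
  | FOr G H => fsat Z G || fsat Z H
  end.

Record nrule (A : Type) : Type := NRule { nhead : formula A; nbody : formula A }.

Definition nprogram (A : Type) := nrule A -> Prop.

Definition nunion (A : Type) (P1 P2 : nprogram A) : nprogram A :=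
  fun r => P1 r \/ P2 r.

Definition nsat_prog (A : Type) (Z : lset A) (P : nprogram A) : Prop :=
  forall r, P r -> fsat Z (nbody r) = true -> fsat Z (nhead r) = true.

Fixpoint freduct (A : Type) (Z : lset A) (F : formula A) : formula A :=
  match F with
  | FNot G => if fsat Z G then FBot else FTop
  | FAnd G H => FAnd (freduct Z G) (freduct Z H)
  | FOr G H => FOr (freduct Z G) (freduct Z H)
  | _ => F
  end.

Definition nreduct (A : Type) (P : nprogram A) (Z : lset A) : nprogram A :=
  fun r' => exists r, P r /\ r' = NRule (freduct Z (nhead r)) (freduct Z (nbody r)).

Definition answer_set_notfree (A : Type) (P : nprogram A) (Z : lset A) : Prop :=
  consistent Z /\ nsat_prog Z P /\
  (forall Z', consistent Z' -> lsubset Z' Z -> nsat_prog Z' P -> lsubset Z Z').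

Definition nanswer_set (A : Type) (P : nprogram A) (Z : lset A) : Prop :=
  answer_set_notfree (nreduct P Z) Z.

Definition nstrong_equiv (A : Type) (P1 P2 : nprogram A) : Prop :=
  forall (P : nprogram A) (Z : lset A),
    nanswer_set (nunion P1 P) Z <-> nanswer_set (nunion P2 P) Z.

(* A rule element: a literal l (positive) or "not l" (negative). *)
Inductive relem (A : Type) : Type :=
| PosE : lit A -> relem A
| NotE : lit A -> relem A.

(* L <= {c_1 = w_1, ..., c_m = w_m} <= U, with L, U extended reals. *)
Record wconstr (A : Type) : Type :=
  WC { lower : Rbar; elems : list (relem A * R); upper : Rbar }.

Record wrule (A : Type) : Type := WRule { whead : wconstr A; wbody : list (wconstr A) }.

Definition wprogram (A : Type) := wrule A -> Prop.

Definition wunion (A : Type) (P1 P2 : wprogram A) : wprogram A :=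
  fun r => P1 r \/ P2 r.

Definition wf_wprogram (A : Type) (P : wprogram A) : Prop :=
  forall r, P r -> forall C, (C = whead r \/ In C (wbody r)) ->
    forall p, In p (elems C) -> 0 <= snd p.

Definition resat (A : Type) (Z : lset A) (e : relem A) : bool :=
  match e with PosE l => Z l | NotE l => negb (Z l) end.

Fixpoint wsum (A : Type) (Z : lset A) (S : list (relem A * R)) : R :=
  match S with
  | [] => 0
  | p :: S' => (if resat Z (fst p) then snd p else 0) + wsum Z S'
  end.

Definition wc_sat (A : Type) (Z : lset A) (C : wconstr A) : Prop :=
  Rbar_le (lower C) (Finite (wsum Z (elems C))) /\
  Rbar_le (Finite (wsum Z (elems C))) (upper C).

Definition wsat_prog (A : Type) (Z : lset A) (P : wprogram A) : Prop :=
  forall r, P r -> (forall C, In C (wbody r) -> wc_sat Z C) -> wc_sat Z (whead r).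

(* Rules of the reduct: l <- (L_1 <= S_1'), ..., (L_n <= S_n'),
   with S_i' consisting of positive pairs only. *)
Record prule (A : Type) : Type :=
  PRule { phead : lit A; pbody : list (Rbar * list (lit A * R)) }.

Definition pprogram (A : Type) := prule A -> Prop.

Fixpoint psum (A : Type) (Z : lset A) (S : list (lit A * R)) : R :=
  match S with
  | [] => 0
  | p :: S' => (if Z (fst p) then snd p else 0) + psum Z S'
  end.

Definition plower_sat (A : Type) (Z : lset A) (c : Rbar * list (lit A * R)) : Prop :=
  Rbar_le (fst c) (Finite (psum Z (snd c))).

Definition psat_prog (A : Type) (Z : lset A) (P : pprogram A) : Prop :=
  forall r, P r -> (forall c, In c (pbody r) -> plower_sat Z c) -> Z (phead r) = true.

Fixpoint pos_part (A : Type) (S : list (relem A * R)) : list (lit A * R) :=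
  match S with
  | [] => []
  | (PosE l, w) :: S' => (l, w) :: pos_part S'
  | (NotE _, _) :: S' => pos_part S'
  end.

Fixpoint neg_sum (A : Type) (Z : lset A) (S : list (relem A * R)) : R :=
  match S with
  | [] => 0
  | (PosE _, _) :: S' => neg_sum Z S'
  | (NotE l, w) :: S' => (if Z l then 0 else w) + neg_sum Z S'
  end.

Definition lower_reduct (A : Type) (Z : lset A) (C : wconstr A) : Rbar * list (lit A * R) :=
  (Rbar_minus (lower C) (Finite (neg_sum Z (elems C))), pos_part (elems C)).

Definition upper_sat (A : Type) (Z : lset A) (C : wconstr A) : Prop :=
  Rbar_le (Finite (wsum Z (elems C))) (upper C).

Definition wreduct (A : Type) (P : wprogram A) (Z : lset A) : pprogram A :=
  fun pr => exists r, P r /\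
    (forall C, In C (wbody r) -> upper_sat Z C) /\
    In (PosE (phead pr)) (map fst (elems (whead r))) /\
    Z (phead pr) = true /\
    pbody pr = map (lower_reduct Z) (wbody r).

Definition is_cl (A : Type) (P : pprogram A) (Z : lset A) : Prop :=
  psat_prog Z P /\ forall Z', psat_prog Z' P -> lsubset Z Z'.

Definition wanswer_set (A : Type) (P : wprogram A) (Z : lset A) : Prop :=
  consistent Z /\ wsat_prog Z P /\ is_cl (wreduct P Z) Z.

Definition wstrong_equiv (A : Type) (P1 P2 : wprogram A) : Prop :=
  forall (P : wprogram A), wf_wprogram P -> forall Z : lset A,
    wanswer_set (wunion P1 P) Z <-> wanswer_set (wunion P2 P) Z.

Definition re_formula (A : Type) (e : relem A) : formula A :=
  match e with PosE l => FLit l | NotE l => FNot (FLit l) end.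

Fixpoint conj (A : Type) (Fs : list (formula A)) : formula A :=
  match Fs with
  | [] => FTop
  | [F] => F
  | F :: Fs' => FAnd F (conj Fs')
  end.

Fixpoint disj (A : Type) (Fs : list (formula A)) : formula A :=
  match Fs with
  | [] => FBot
  | [F] => F
  | F :: Fs' => FOr F (disj Fs')
  end.

Fixpoint subfamilies (X : Type) (s : list X) : list (list X) :=
  match s with
  | [] => [[]]
  | x :: s' => map (cons x) (subfamilies s') ++ subfamilies s'
  end.

Fixpoint sumw (A : Type) (I : list (relem A * R)) : R :=
  match I with [] => 0 | p :: I' => snd p + sumw I' end.

Definition family_formula (A : Type) (I : list (relem A * R)) : formula A :=
  conj (map (fun p => re_formula (fst p)) I).

Definition tr_le (A : Type) (w : Rbar) (S : list (relem A * R)) : formula A :=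
  disj (map (@family_formula A)
    (filter (fun I => if Rbar_le_dec w (Finite (sumw I)) then true else false)
            (subfamilies S))).

Definition tr_lt (A : Type) (w : Rbar) (S : list (relem A * R)) : formula A :=
  disj (map (@family_formula A)
    (filter (fun I => if Rbar_lt_dec w (Finite (sumw I)) then true else false)
            (subfamilies S))).

Definition tr_constr (A : Type) (C : wconstr A) : formula A :=
  FAnd (tr_le (lower C) (elems C)) (FNot (tr_lt (upper C) (elems C))).

Fixpoint pos_elems (A : Type) (S : list (relem A * R)) : list (lit A) :=
  match S with
  | [] => []
  | (PosE l, _) :: S' => l :: pos_elems S'
  | (NotE _, _) :: S' => pos_elems S'
  end.

Definition tr_rule (A : Type) (r : wrule A) : nrule A :=
  NRule (conj (map (fun l => FOr (FLit l) (FNot (FLit l))) (pos_elems (elems (whead r)))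
               ++ [tr_constr (whead r)]))
        (conj (map (@tr_constr A) (wbody r))).

Definition tr_prog (A : Type) (P : wprogram A) : nprogram A :=
  fun nr => exists r, P r /\ nr = tr_rule r.

(* Main.v *)
Require Import Defs.
From Stdlib Require Import Reals List Lra Bool Classical FunctionalExtensionality.
From Coquelicot Require Import Rbar.
Import ListNotations.
Open Scope R_scope.

Section S.
Context {A : Type}.
Implicit Types X Y Z : lset A.

Lemma fsat_self Z (F : formula A) : fsat Z (freduct Z F) = fsat Z F.
Proof.
  induction F; simpl; try reflexivity.
  - destruct (fsat Z F); reflexivity.
  - rewrite IHF1, IHF2; reflexivity.
  - rewrite IHF1, IHF2; reflexivity.
Qed.

Lemma fnot_red X Y (F : formula A) : fsat X (freduct Y (FNot F)) = negb (fsat Y F).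
Proof. simpl. destruct (fsat Y F); reflexivity. Qed.

Lemma conj_red X Y (Fs : list (formula A)) :
  fsat X (freduct Y (conj Fs)) = forallb (fun F => fsat X (freduct Y F)) Fs.
Proof.
  induction Fs as [|F Fs IH]; [reflexivity|].
  destruct Fs as [|G Gs].
  - simpl. rewrite andb_true_r. reflexivity.
  - change (conj (F :: G :: Gs)) with (FAnd F (conj (G :: Gs))).
    change (fsat X (freduct Y (FAnd F (conj (G :: Gs))))) with
      (fsat X (freduct Y F) && fsat X (freduct Y (conj (G :: Gs)))).
    rewrite IH. reflexivity.
Qed.

Lemma disj_red X Y (Fs : list (formula A)) :
  fsat X (freduct Y (disj Fs)) = existsb (fun F => fsat X (freduct Y F)) Fs.
Proof.
  induction Fs as [|F Fs IH]; [reflexivity|].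
  destruct Fs as [|G Gs].
  - simpl. rewrite orb_false_r. reflexivity.
  - change (disj (F :: G :: Gs)) with (FOr F (disj (G :: Gs))).
    change (fsat X (freduct Y (FOr F (disj (G :: Gs))))) with
      (fsat X (freduct Y F) || fsat X (freduct Y (disj (G :: Gs)))).
    rewrite IH. reflexivity.
Qed.

Definition hsat X Y (e : relem A) : bool :=
  match e with PosE l => X l | NotE l => negb (Y l) end.

Fixpoint hsum X Y (S : list (relem A * R)) : R :=
  match S with
  | [] => 0
  | p :: S' => (if hsat X Y (fst p) then snd p else 0) + hsum X Y S'
  end.

Lemma re_red X Y e : fsat X (freduct Y (re_formula e)) = hsat X Y e.
Proof. destruct e; simpl; [reflexivity| destruct (Y l); reflexivity]. Qed.

Lemma fam_red X Y (I : list (relem A * R)) :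
  fsat X (freduct Y (family_formula I)) = forallb (fun p => hsat X Y (fst p)) I.
Proof.
  unfold family_formula. rewrite conj_red.
  induction I as [|p I IH]; [reflexivity|]. simpl. rewrite re_red, IH. reflexivity.
Qed.

Definition nonneg (S : list (relem A * R)) := forall p, In p S -> 0 <= snd p.

Lemma nonneg_tl p S : nonneg (p :: S) -> nonneg S.
Proof. intros H q Hq. apply H. right; exact Hq. Qed.
Arguments nonneg_tl {p S}.

Lemma hsum_ge0 X Y S : nonneg S -> 0 <= hsum X Y S.
Proof.
  induction S as [|p S IH]; simpl; intros H; [lra|].
  assert (0 <= snd p) by (apply H; left; reflexivity).
  specialize (IH (nonneg_tl H)). destruct (hsat X Y (fst p)); lra.
Qed.

Lemma sub_le X Y S : nonneg S -> forall I, In I (subfamilies S) ->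
  forallb (fun p => hsat X Y (fst p)) I = true -> sumw I <= hsum X Y S.
Proof.
  induction S as [|x s IH]; intros Hn I HI Hf.
  - simpl in HI. destruct HI as [<-|[]]. simpl; lra.
  - simpl in HI. apply in_app_or in HI. simpl.
    assert (0 <= snd x) by (apply Hn; left; reflexivity).
    specialize (IH (nonneg_tl Hn)).
    destruct HI as [HI|HI].
    + apply in_map_iff in HI. destruct HI as [I' [<- HI']].
      simpl in Hf. apply andb_true_iff in Hf. destruct Hf as [H1 H2].
      rewrite H1. simpl. specialize (IH I' HI' H2). lra.
    + specialize (IH I HI Hf). destruct (hsat X Y (fst x)); lra.
Qed.

Lemma filter_sub X Y S :
  In (filter (fun p => hsat X Y (fst p)) S) (subfamilies S) /\
  forallb (fun p => hsat X Y (fst p)) (filter (fun p => hsat X Y (fst p)) S) = true /\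
  sumw (filter (fun p => hsat X Y (fst p)) S) = hsum X Y S.
Proof.
  induction S as [|x s IH]; simpl.
  - split; [left; reflexivity| split; reflexivity].
  - destruct IH as [H1 [H2 H3]].
    destruct (hsat X Y (fst x)) eqn:E; simpl.
    + split; [apply in_or_app; left; apply in_map; exact H1|].
      rewrite E, H2, H3. split; reflexivity.
    + split; [apply in_or_app; right; exact H1|]. split; [exact H2| lra].
Qed.

Lemma disj_filter_red X Y (p : list (relem A * R) -> bool) S :
  fsat X (freduct Y (disj (map (@family_formula A) (filter p (subfamilies S))))) = true <->
  exists I, In I (subfamilies S) /\ p I = true /\
            forallb (fun q => hsat X Y (fst q)) I = true.
Proof.
  rewrite disj_red, existsb_exists. split.
  - intros [F [HF HF2]]. apply in_map_iff in HF. destruct HF as [I [<- HI]].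
    apply filter_In in HI. rewrite fam_red in HF2. exists I; tauto.
  - intros [I [H1 [H2 H3]]]. exists (family_formula I). split.
    + apply in_map. apply filter_In. tauto.
    + rewrite fam_red. exact H3.
Qed.

Lemma tr_le_red X Y w S : nonneg S ->
  (fsat X (freduct Y (tr_le w S)) = true <-> Rbar_le w (Finite (hsum X Y S))).
Proof.
  intros Hn. unfold tr_le. rewrite disj_filter_red. split.
  - intros [I [H1 [H2 H3]]]. destruct (Rbar_le_dec w (Finite (sumw I))) as [Hw|]; [|discriminate].
    eapply Rbar_le_trans; [exact Hw|]. simpl. apply (sub_le X Y S Hn I H1 H3).
  - intros Hw. destruct (filter_sub X Y S) as [H1 [H2 H3]].
    eexists; split; [exact H1|]. split; [|exact H2].
    rewrite H3. destruct (Rbar_le_dec w (Finite (hsum X Y S))); [reflexivity| contradiction].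
Qed.

Lemma tr_lt_red X Y w S : nonneg S ->
  (fsat X (freduct Y (tr_lt w S)) = true <-> Rbar_lt w (Finite (hsum X Y S))).
Proof.
  intros Hn. unfold tr_lt. rewrite disj_filter_red. split.
  - intros [I [H1 [H2 H3]]]. destruct (Rbar_lt_dec w (Finite (sumw I))) as [Hw|]; [|discriminate].
    eapply Rbar_lt_le_trans; [exact Hw|]. simpl. apply (sub_le X Y S Hn I H1 H3).
  - intros Hw. destruct (filter_sub X Y S) as [H1 [H2 H3]].
    eexists; split; [exact H1|]. split; [|exact H2].
    rewrite H3. destruct (Rbar_lt_dec w (Finite (hsum X Y S))); [reflexivity| contradiction].
Qed.

Lemma wsum_hsum Z S : wsum Z S = hsum Z Z S.
Proof. induction S as [|p S IH]; [reflexivity|]; destruct p as [[l|l] w]; simpl; rewrite IH; reflexivity. Qed.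

Lemma hsum_split X Y S : hsum X Y S = psum X (pos_part S) + neg_sum Y S.
Proof.
  induction S as [|p S IH]; [simpl; lra|]; destruct p as [[l|l] w]; simpl; rewrite IH.
  - simpl. lra.
  - destruct (Y l); simpl; lra.
Qed.

Lemma tr_constr_red X Y C : nonneg (elems C) ->
  (fsat X (freduct Y (tr_constr C)) = true <->
   Rbar_le (lower C) (Finite (hsum X Y (elems C))) /\ upper_sat Y C).
Proof.
  intros Hn. unfold tr_constr.
  change (fsat X (freduct Y (FAnd (tr_le (lower C) (elems C)) (FNot (tr_lt (upper C) (elems C))))))
    with (fsat X (freduct Y (tr_le (lower C) (elems C))) &&
          fsat X (freduct Y (FNot (tr_lt (upper C) (elems C))))).
  rewrite andb_true_iff, tr_le_red by exact Hn. rewrite fnot_red, <- fsat_self.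
  unfold upper_sat. rewrite wsum_hsum.
  split; intros [H1 H2]; split; auto.
  - apply Rbar_not_lt_le. intros Hc. apply (tr_lt_red Y Y (upper C) (elems C) Hn) in Hc.
    rewrite Hc in H2. discriminate.
  - apply negb_true_iff. destruct (fsat Y (freduct Y (tr_lt (upper C) (elems C)))) eqn:E; [|reflexivity].
    apply (tr_lt_red Y Y (upper C) (elems C) Hn) in E. exfalso. exact (Rbar_lt_not_le _ _ E H2).
Qed.


Lemma in_pos_elems l (S : list (relem A * R)) :
  In (PosE l) (map fst S) <-> In l (pos_elems S).
Proof.
  induction S as [|p S IH]; [simpl; tauto|]. destruct p as [[l'|l'] w]; simpl.
  - split; intros [H|H]; try (right; apply IH; exact H).
    + left; congruence.
    + left; congruence.
  - split; [intros [H|H]; [discriminate| apply IH; exact H]| intros H; right; apply IH; exact H].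
Qed.

Lemma hsum_mono X X' Y S : nonneg S -> lsubset X X' -> hsum X Y S <= hsum X' Y S.
Proof.
  intros Hn Hs. induction S as [|p S IH]; simpl; [lra|].
  assert (0 <= snd p) by (apply Hn; left; reflexivity).
  specialize (IH (nonneg_tl Hn)).
  destruct p as [[l|l] w]; simpl in *.
  - destruct (X l) eqn:E.
    + rewrite (Hs l E). lra.
    + destruct (X' l); lra.
  - lra.
Qed.

Lemma psum_mono X X' (S : list (lit A * R)) : (forall q, In q S -> 0 <= snd q) ->
  lsubset X X' -> psum X S <= psum X' S.
Proof.
  intros Hn Hs. induction S as [|p S IH]; simpl; [lra|].
  assert (0 <= snd p) by (apply Hn; left; reflexivity).
  assert (IH' : psum X S <= psum X' S) by (apply IH; intros q Hq; apply Hn; right; exact Hq).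
  destruct (X (fst p)) eqn:E.
  - rewrite (Hs _ E). lra.
  - destruct (X' (fst p)); lra.
Qed.

Lemma nonneg_pos_part S : nonneg S -> forall q, In q (pos_part S) -> 0 <= snd q.
Proof.
  induction S as [|p S IH]; simpl; [tauto|]. intros Hn q Hq.
  specialize (IH (nonneg_tl Hn)).
  destruct p as [[l|l] w]; simpl in Hq.
  - destruct Hq as [<-|Hq]; [apply (Hn (PosE l, w)); left; reflexivity| apply IH; exact Hq].
  - apply IH; exact Hq.
Qed.

Lemma psum_eq X Y S : lsubset X Y ->
  (forall l, In l (pos_elems S) -> Y l = true -> X l = true) ->
  psum X (pos_part S) = psum Y (pos_part S).
Proof.
  intros Hs. induction S as [|p S IH]; simpl; [reflexivity|]. intros H.
  destruct p as [[l|l] w]; simpl in *.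
  - rewrite IH by (intros; apply H; auto).
    destruct (Y l) eqn:E.
    + rewrite (H l (or_introl eq_refl) E). reflexivity.
    + destruct (X l) eqn:E2; [rewrite (Hs l E2) in E; discriminate| reflexivity].
  - apply IH. exact H.
Qed.

Lemma plower_red X Y C :
  plower_sat X (lower_reduct Y C) <-> Rbar_le (lower C) (Finite (hsum X Y (elems C))).
Proof.
  unfold plower_sat, lower_reduct. simpl. rewrite hsum_split.
  destruct (lower C) as [r| |]; simpl; split; intros; auto; lra.
Qed.

Lemma wc_sat_h Y C : wc_sat Y C <-> Rbar_le (lower C) (Finite (hsum Y Y (elems C))) /\ upper_sat Y C.
Proof. unfold wc_sat, upper_sat. rewrite wsum_hsum. tauto. Qed.

Definition wf_rule (r : wrule A) := nonneg (elems (whead r)) /\ forall C, In C (wbody r) -> nonneg (elems C).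

Lemma head_red X Y (r : wrule A) : nonneg (elems (whead r)) ->
  (fsat X (freduct Y (nhead (tr_rule r))) = true <->
   (forall l, In l (pos_elems (elems (whead r))) -> X l || negb (Y l) = true) /\
   Rbar_le (lower (whead r)) (Finite (hsum X Y (elems (whead r)))) /\ upper_sat Y (whead r)).
Proof.
  intros Hn. unfold tr_rule. simpl nhead. rewrite conj_red, forallb_app, andb_true_iff.
  assert (E : forall f (x : formula A), forallb f [x] = f x && true) by reflexivity.
  rewrite E, andb_true_r, tr_constr_red by exact Hn.
  rewrite forallb_forall. split; intros [H1 H2]; split; auto.
  - intros l Hl. specialize (H1 _ (in_map (fun l => FOr (FLit l) (FNot (FLit l))) _ _ Hl)).
    simpl in H1. destruct (Y l); simpl in *; rewrite ?orb_false_r in *; auto.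
  - intros F HF. apply in_map_iff in HF. destruct HF as [l [<- Hl]]. specialize (H1 l Hl).
    simpl. destruct (Y l); simpl in *; rewrite ?orb_false_r in *; auto.
Qed.

Lemma body_red X Y (r : wrule A) : (forall C, In C (wbody r) -> nonneg (elems C)) ->
  (fsat X (freduct Y (nbody (tr_rule r))) = true <->
   forall C, In C (wbody r) -> Rbar_le (lower C) (Finite (hsum X Y (elems C))) /\ upper_sat Y C).
Proof.
  intros Hn. unfold tr_rule. simpl nbody. rewrite conj_red, forallb_forall. split.
  - intros H C HC. apply tr_constr_red; [apply Hn; exact HC|]. apply H. apply in_map. exact HC.
  - intros H F HF. apply in_map_iff in HF. destruct HF as [C [<- HC]].
    apply tr_constr_red; [apply Hn; exact HC|]. apply H. exact HC.
Qed.

Definition WGr (r : wrule A) X Y : Prop :=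
  ((forall C, In C (wbody r) -> wc_sat Y C) -> wc_sat Y (whead r)) /\
  ((forall C, In C (wbody r) -> upper_sat Y C) -> forall l,
     In (PosE l) (map fst (elems (whead r))) -> Y l = true ->
     (forall c, In c (map (lower_reduct Y) (wbody r)) -> plower_sat X c) -> X l = true).

Definition NGr (r : wrule A) X Y : Prop :=
  fsat X (freduct Y (nbody (tr_rule r))) = true -> fsat X (freduct Y (nhead (tr_rule r))) = true.

Lemma K_rule (r : wrule A) X Y : wf_rule r -> lsubset X Y ->
  (WGr r X Y <-> NGr r Y Y /\ NGr r X Y).
Proof.
  intros [Hh Hb] Hs. unfold WGr, NGr.
  rewrite !body_red, !head_red by assumption.
  setoid_rewrite wc_sat_h. setoid_rewrite in_pos_elems.
  split.
  - intros [W1 W2]. split.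
    + intros HB. split.
      * intros l _. destruct (Y l); reflexivity.
      * apply W1. exact HB.
    + intros HB.
      assert (HB' : forall C, In C (wbody r) -> upper_sat Y C) by (intros C HC; apply HB; exact HC).
      assert (HX : forall l, In l (pos_elems (elems (whead r))) -> Y l = true -> X l = true).
      { intros l Hl HYl. apply (W2 HB' l Hl HYl). intros c Hc.
        apply in_map_iff in Hc. destruct Hc as [C [<- HC]]. apply plower_red. apply HB; exact HC. }
      assert (HYY : forall C, In C (wbody r) ->
                Rbar_le (lower C) (Finite (hsum Y Y (elems C))) /\ upper_sat Y C).
      { intros C HC. destruct (HB C HC) as [H1 H2]. split; [|exact H2].
        eapply Rbar_le_trans; [exact H1|]. simpl. apply hsum_mono; auto. }
      destruct (W1 HYY) as [H1 H2]. split; [|split; [|exact H2]].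
      * intros l Hl. destruct (Y l) eqn:E; [rewrite (HX l Hl E); reflexivity| apply orb_true_r].
      * rewrite !hsum_split in *. rewrite (psum_eq X Y _ Hs HX). exact H1.
  - intros [N1 N2]. split.
    + intros HB. apply N1. exact HB.
    + intros HU l Hl HYl HL.
      assert (HB : forall C, In C (wbody r) ->
                Rbar_le (lower C) (Finite (hsum X Y (elems C))) /\ upper_sat Y C).
      { intros C HC. split; [|apply HU; exact HC]. apply plower_red. apply HL. apply in_map. exact HC. }
      destruct (N2 HB) as [H1 _]. specialize (H1 l Hl). rewrite HYl in H1.
      rewrite orb_false_r in H1. exact H1.
Qed.


Definition WG (P : wprogram A) X Y : Prop := wsat_prog Y P /\ psat_prog X (wreduct P Y).
Definition NS (P : nprogram A) X Y : Prop := nsat_prog X (nreduct P Y).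

Lemma wf_rule_of (P : wprogram A) r : wf_wprogram P -> P r -> wf_rule r.
Proof.
  intros H Hr. split.
  - intros p Hp. apply (H r Hr (whead r) (or_introl eq_refl) p Hp).
  - intros C HC p Hp. apply (H r Hr C (or_intror HC) p Hp).
Qed.

Lemma WG_char (P : wprogram A) X Y : WG P X Y <-> forall r, P r -> WGr r X Y.
Proof.
  unfold WG, WGr, wsat_prog, psat_prog. split.
  - intros [H1 H2] r Hr. split; [apply H1; exact Hr|].
    intros HU l Hl HYl Hb.
    apply (H2 (PRule l (map (lower_reduct Y) (wbody r)))); [|exact Hb].
    exists r. simpl. repeat split; auto.
  - intros H. split.
    + intros r Hr. apply (proj1 (H r Hr)).
    + intros pr [r [Hr [HU [Hin [HY Hb]]]]] Hc. rewrite Hb in Hc.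
      apply (proj2 (H r Hr) HU (phead pr) Hin HY Hc).
Qed.

Lemma NS_char (P : wprogram A) X Y : NS (tr_prog P) X Y <-> forall r, P r -> NGr r X Y.
Proof.
  unfold NS, NGr, nsat_prog, nreduct, tr_prog. split.
  - intros H r Hr. apply (H (NRule (freduct Y (nhead (tr_rule r))) (freduct Y (nbody (tr_rule r))))).
    exists (tr_rule r). split; [exists r; split; auto| reflexivity].
  - intros H r' [r0 [[r [Hr ->]] ->]]. simpl. apply H. exact Hr.
Qed.

Lemma lsubset_refl Z : @lsubset A Z Z.
Proof. intros l H; exact H. Qed.

Lemma K_prog (P : wprogram A) X Y : wf_wprogram P -> lsubset X Y ->
  (WG P X Y <-> NS (tr_prog P) Y Y /\ NS (tr_prog P) X Y).
Proof.
  intros Hw Hs. rewrite WG_char, !NS_char. split.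
  - intros H. split; intros r Hr; apply (K_rule r X Y (wf_rule_of P r Hw Hr) Hs); auto.
  - intros [H1 H2] r Hr. apply (K_rule r X Y (wf_rule_of P r Hw Hr) Hs); auto.
Qed.

Lemma psat_self (P : wprogram A) Z : psat_prog Z (wreduct P Z).
Proof. intros pr [r [_ [_ [_ [HZ _]]]]] _. exact HZ. Qed.

Lemma wans (P : wprogram A) Z : wf_wprogram P ->
  (wanswer_set P Z <-> consistent Z /\ WG P Z Z /\
     forall X, lsubset X Z -> WG P X Z -> lsubset Z X).
Proof.
  intros Hw. unfold wanswer_set, is_cl, WG. split.
  - intros [Hc [Hs [Hp Hm]]]. split; [exact Hc|]. split; [split; auto|].
    intros X _ [_ HX]. apply Hm. exact HX.
  - intros [Hc [[Hs Hp] Hm]]. split; [exact Hc|]. split; [exact Hs|]. split; [exact Hp|].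
    intros Z' HZ'.
    set (W := fun l => Z l && Z' l).
    assert (HWZ : lsubset W Z) by (intros l Hl; unfold W in Hl; apply andb_true_iff in Hl; tauto).
    assert (HWZ' : lsubset W Z') by (intros l Hl; unfold W in Hl; apply andb_true_iff in Hl; tauto).
    assert (HW : psat_prog W (wreduct P Z)).
    { intros pr Hpr Hb. unfold W. apply andb_true_iff. split.
      - destruct Hpr as [r [_ [_ [_ [HZ _]]]]]. exact HZ.
      - apply (HZ' pr Hpr). intros c Hcin. specialize (Hb c Hcin).
        destruct Hpr as [r [Hr [_ [_ [_ Hb']]]]]. rewrite Hb' in Hcin.
        apply in_map_iff in Hcin. destruct Hcin as [C [<- HC]].
        unfold plower_sat in *. eapply Rbar_le_trans; [exact Hb|]. simpl.
        apply psum_mono; [|exact HWZ'].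
        apply nonneg_pos_part. apply (proj2 (wf_rule_of P r Hw Hr)). exact HC. }
    intros l Hl. apply HWZ'. apply (Hm W HWZ); [split; assumption|exact Hl].
Qed.

Lemma nans (P : nprogram A) Z :
  nanswer_set P Z <-> consistent Z /\ NS P Z Z /\
     forall X, lsubset X Z -> NS P X Z -> lsubset Z X.
Proof.
  unfold nanswer_set, answer_set_notfree, NS. split.
  - intros [Hc [Hs Hm]]. split; [exact Hc|]. split; [exact Hs|].
    intros X HX HN. apply Hm; auto.
    intros a. specialize (Hc a). destruct (X (Atom a)) eqn:E1; [|reflexivity].
    destruct (X (NegA a)) eqn:E2; [|reflexivity].
    rewrite (HX _ E1), (HX _ E2) in Hc. discriminate.
  - intros [Hc [Hs Hm]]. split; [exact Hc|]. split; [exact Hs|].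
    intros X _ HX HN. apply Hm; auto.
Qed.

Lemma WG_union (P1 P2 : wprogram A) X Y : WG (wunion P1 P2) X Y <-> WG P1 X Y /\ WG P2 X Y.
Proof.
  unfold WG, wsat_prog, psat_prog, wunion, wreduct. split.
  - intros [H1 H2]. split; split.
    + intros r0 Hr. apply H1. left; exact Hr.
    + intros pr [r [Hr Hrest]]. apply H2. exists r. split; [left; exact Hr| exact Hrest].
    + intros r0 Hr. apply H1. right; exact Hr.
    + intros pr [r [Hr Hrest]]. apply H2. exists r. split; [right; exact Hr| exact Hrest].
  - intros [[H1 H2] [H3 H4]]. split.
    + intros r [Hr|Hr]; [apply H1|apply H3]; exact Hr.
    + intros pr [r [[Hr|Hr] Hrest]]; [apply H2|apply H4]; exists r; split; auto.
Qed.

Lemma NS_union (P1 P2 : nprogram A) X Y : NS (nunion P1 P2) X Y <-> NS P1 X Y /\ NS P2 X Y.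
Proof.
  unfold NS, nsat_prog, nunion, nreduct. split.
  - intros H. split; intros r' [r [Hr ->]]; apply H; exists r; split; auto.
  - intros [H1 H2] r' [r [[Hr|Hr] ->]]; [apply H1|apply H2]; exists r; split; auto.
Qed.

Lemma wf_union (P1 P2 : wprogram A) : wf_wprogram P1 -> wf_wprogram P2 -> wf_wprogram (wunion P1 P2).
Proof. intros H1 H2 r [Hr|Hr]; [apply H1|apply H2]; exact Hr. Qed.

Lemma bridge (P1 P : wprogram A) Z : wf_wprogram P1 -> wf_wprogram P ->
  (wanswer_set (wunion P1 P) Z <-> nanswer_set (nunion (tr_prog P1) (tr_prog P)) Z).
Proof.
  intros H1 H2. rewrite (wans _ _ (wf_union _ _ H1 H2)), nans.
  setoid_rewrite WG_union. setoid_rewrite NS_union.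
  split.
  - intros [Hc [[A1 A2] Hm]]. split; [exact Hc|].
    apply (K_prog _ _ _ H1 (lsubset_refl Z)) in A1.
    apply (K_prog _ _ _ H2 (lsubset_refl Z)) in A2.
    split; [tauto|]. intros X HX [N1 N2]. apply Hm; [exact HX|].
    split; apply K_prog; tauto.
  - intros [Hc [[N1 N2] Hm]]. split; [exact Hc|].
    split; [split; apply K_prog; auto using lsubset_refl|].
    intros X HX [A1 A2]. apply Hm; [exact HX|].
    apply (K_prog _ _ _ H1 HX) in A1. apply (K_prog _ _ _ H2 HX) in A2. tauto.
Qed.


Definition wfact (l : lit A) : wrule A := WRule (WC (Finite 1) [(PosE l, 1)] p_infty) [].
Definition wimp (l l' : lit A) : wrule A :=
  WRule (WC (Finite 1) [(PosE l, 1)] p_infty) [WC (Finite 1) [(PosE l', 1)] p_infty].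

Definition Dprog X Y : wprogram A := fun r =>
  (exists l, X l = true /\ r = wfact l) \/
  (exists l l', Y l = true /\ X l = false /\ Y l' = true /\ X l' = false /\ r = wimp l l').

Lemma D_wf X Y : wf_wprogram (Dprog X Y).
Proof.
  intros r [[l [_ ->]]|[l [l' [_ [_ [_ [_ ->]]]]]]] C HC p Hp; simpl in HC.
  - destruct HC as [->|[]]. simpl in Hp. destruct Hp as [<-|[]]. simpl; lra.
  - destruct HC as [->|[<-|[]]]; simpl in Hp; destruct Hp as [<-|[]]; simpl; lra.
Qed.

Lemma D_wsat X Y : lsubset X Y -> wsat_prog Y (Dprog X Y).
Proof.
  intros Hs r [[l [Hl ->]]|[l [l' [Hl [_ [_ [_ ->]]]]]]] _; unfold wc_sat; simpl.
  - rewrite (Hs l Hl). simpl. split; [lra| exact I].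
  - rewrite Hl. simpl. split; [lra| exact I].
Qed.

Lemma D_psat X Y W : lsubset X Y -> psat_prog W (wreduct (Dprog X Y) Y) ->
  lsubset X W /\
  (forall l l', Y l = true -> X l = false -> Y l' = true -> X l' = false -> W l' = true -> W l = true).
Proof.
  intros Hs H. split.
  - intros l Hl. apply (H (PRule l [])).
    + exists (wfact l). split; [left; exists l; auto|]. simpl.
      split; [intros C []|]. split; [left; reflexivity|]. split; [apply Hs; exact Hl| reflexivity].
    + intros c [].
  - intros l l' H1 H2 H3 H4 H5.
    apply (H (PRule l [lower_reduct Y (WC (Finite 1) [(PosE l', 1)] p_infty)])).
    + exists (wimp l l'). split; [right; exists l, l'; auto|]. simpl.
      split; [intros C [<-|[]]; exact I|]. split; [left; reflexivity|]. split; [exact H1| reflexivity].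
    + intros c [<-|[]]. apply plower_red. simpl. rewrite H5. simpl. lra.
Qed.

Lemma D_psatX X Y : psat_prog X (wreduct (Dprog X Y) Y).
Proof.
  intros pr [r [[[l [Hl ->]]|[l [l' [_ [_ [_ [Hl' ->]]]]]]] [_ [Hin [_ Hb]]]]] Hc.
  - simpl in Hin. destruct Hin as [Hin|[]]. inversion Hin. subst. exact Hl.
  - exfalso. rewrite Hb in Hc. simpl in Hc.
    specialize (Hc _ (or_introl eq_refl)). apply plower_red in Hc. simpl in Hc.
    rewrite Hl' in Hc. simpl in Hc. lra.
Qed.

Lemma wsat_union_l (P1 P2 : wprogram A) Y : wsat_prog Y (wunion P1 P2) -> wsat_prog Y P1.
Proof. intros H r Hr. apply H. left; exact Hr. Qed.

Lemma WG_transfer (O1 O2 : wprogram A) X Y :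
  wf_wprogram O1 -> wf_wprogram O2 -> wstrong_equiv O1 O2 ->
  consistent Y -> lsubset X Y -> WG O1 X Y -> WG O2 X Y.
Proof.
  intros Hw1 Hw2 HSE Hc Hs [W1 P1].
  assert (Step1 : wsat_prog Y O2).
  { assert (Ha : wanswer_set (wunion O1 (Dprog Y Y)) Y).
    { apply wans; [apply wf_union; auto; apply D_wf|].
      split; [exact Hc|]. split.
      - apply WG_union. split; split; auto using psat_self, D_wsat, lsubset_refl.
      - intros X' _ HX'. apply WG_union in HX'. destruct HX' as [_ [_ HX']].
        apply (D_psat Y Y X' (lsubset_refl Y) HX'). }
    apply (HSE (Dprog Y Y) (D_wf Y Y) Y) in Ha.
    destruct Ha as [_ [Ha _]]. exact (wsat_union_l _ _ _ Ha). }
  split; [exact Step1|].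
  apply NNPP. intros Hn.
  assert (Ha : wanswer_set (wunion O2 (Dprog X Y)) Y).
  { apply wans; [apply wf_union; auto; apply D_wf|].
    split; [exact Hc|]. split.
    - apply WG_union. split; split; auto using psat_self, D_wsat.
    - intros X' HX'Y HX'. apply WG_union in HX'. destruct HX' as [[_ HP2] [_ HD]].
      destruct (D_psat X Y X' Hs HD) as [HXX' Himp].
      destruct (classic (exists l0, Y l0 = true /\ X l0 = false /\ X' l0 = true)) as [[l0 [E1 [E2 E3]]]|Hno].
      + intros l Hl. destruct (X l) eqn:E; [apply HXX'; exact E|].
        apply (Himp l l0); auto.
      + exfalso. apply Hn.
        assert (Heq : X' = X).
        { apply functional_extensionality. intros l.
          destruct (X l) eqn:E; [apply HXX'; exact E|].
          destruct (X' l) eqn:E'; [|reflexivity].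
          exfalso. apply Hno. exists l. split; [apply HX'Y; exact E'|]. auto. }
        rewrite <- Heq. exact HP2. }
  apply (HSE (Dprog X Y) (D_wf X Y) Y) in Ha.
  apply wans in Ha; [|apply wf_union; auto; apply D_wf].
  destruct Ha as [_ [_ Hm]].
  assert (HYX : lsubset Y X).
  { apply Hm; [exact Hs|]. apply WG_union. split; [split; auto|].
    split; [apply D_wsat; exact Hs| apply D_psatX]. }
  assert (Heq : X = Y).
  { apply functional_extensionality. intros l.
    destruct (Y l) eqn:E; [apply HYX; exact E|].
    destruct (X l) eqn:E'; [rewrite (Hs l E') in E; discriminate| reflexivity]. }
  apply Hn. rewrite Heq. apply psat_self.
Qed.

Lemma nanswer_transfer (P1 P2 P : nprogram A) Z :
  (forall X Y, consistent Y -> lsubset X Y ->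
     (NS P1 Y Y /\ NS P1 X Y -> NS P2 Y Y /\ NS P2 X Y) /\
     (NS P2 Y Y /\ NS P2 X Y -> NS P1 Y Y /\ NS P1 X Y)) ->
  nanswer_set (nunion P1 P) Z -> nanswer_set (nunion P2 P) Z.
Proof.
  intros Hg. rewrite !nans. setoid_rewrite NS_union.
  intros [Hc [[N1 NP] Hm]].
  assert (N2 : NS P2 Z Z) by (apply (proj1 (Hg Z Z Hc (lsubset_refl Z))); auto).
  split; [exact Hc|]. split; [auto|].
  intros X HX [N2X NPX]. apply Hm; [exact HX|]. split; [|exact NPX].
  apply (proj2 (Hg X Z Hc HX)). auto.
Qed.

End S.

Theorem proposition4 (A : Type) (O1 O2 : wprogram A) :
  wf_wprogram O1 -> wf_wprogram O2 ->
  (wstrong_equiv O1 O2 <-> nstrong_equiv (tr_prog O1) (tr_prog O2)).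
Proof.
  intros Hw1 Hw2. split.
  - intros HSE.
    assert (HSE' : wstrong_equiv O2 O1) by (intros P HP Z; symmetry; apply HSE; exact HP).
    assert (Hg : forall X Y, consistent Y -> lsubset X Y ->
     (NS (tr_prog O1) Y Y /\ NS (tr_prog O1) X Y -> NS (tr_prog O2) Y Y /\ NS (tr_prog O2) X Y) /\
     (NS (tr_prog O2) Y Y /\ NS (tr_prog O2) X Y -> NS (tr_prog O1) Y Y /\ NS (tr_prog O1) X Y)).
    { intros X Y Hc Hs. split; intros H.
      - apply K_prog; auto. apply (WG_transfer O1 O2); auto. apply K_prog; auto.
      - apply K_prog; auto. apply (WG_transfer O2 O1); auto. apply K_prog; auto. }
    intros P Z. split; apply nanswer_transfer.
    + exact Hg.
    + intros X Y Hc Hs. destruct (Hg X Y Hc Hs). split; auto.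
  - intros HN P HP Z. rewrite !bridge by assumption. apply HN.
Qed.
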